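(* There is a universal constant $c>0$ such that for every integer $k\ge 3$ and every $\varepsilon\in(0,1/10)$, \[ d(k,\varepsilon)\ \le\ \frac{\log(\lceil 1/\varepsilon\rceil+1)}{\log(\lceil 1/\varepsilon\rceil+1)-\log(1-1/k)}\ \le\ 1-\frac{c}{k\,|\log\varepsilon|}. \] Moreover, the first inequality holds with $d(k,\varepsilon)$ replaced by the Assouad dimension $\dim_A(E)$ of any bounded set $E\subset\mathbb{R}$ that $\varepsilon$-avoids $k$APs.
   Context: A $k$-term arithmetic progression ($k$AP) is a set $P=\{x, x+\lambda, \dots, x+(k-1)\lambda\}\subset\mathbb{R}$ with $\lambda>0$, called the gap length of $P$. Given $\varepsilon\in(0,1)$, a set $E\subset\mathbb{R}$ is said to $\varepsilon$-avoid $k$APs if for every $k$AP $P$ with gap length $\lambda$ one has $\sup_{p\in P}\inf_{x\in E}|x-p|\ \ge\ \varepsilon\lambda$. Define $d(k,\varepsilon)=\sup\{\dim_H(E): E\subset\mathbb{R} \text{ bounded and } E \ \varepsilon\text{-avoids } k\text{APs}\}$, where $\dim_H$ is Hausdorff dimension. For bounded $F$ and $r>0$ let $N_r(F)$ be the least number of open balls of radius at most $r$ covering $F$; the Assouad dimension of $E\subseteq\mathbb{R}$ is $\dim_A(E)=\inf\{\alpha\ge 0: \exists C>0 \text{ such that for all } 0<r<R,\ \sup_{x\in E}N_r(B(x,R)\cap E)\le C(R/r)^\alpha\}$. *)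

(* Defs.v *)
From Stdlib Require Import Reals Lra.
Open Scope R_scope.

(* Ceiling of a real number: the least integer >= x. *)
Definition Rceil (x : R) : R := IZR (1 - up (- x))%Z.

Definition bounded_set (E : R -> Prop) : Prop :=
  exists M : R, forall x, E x -> Rabs x <= M.

(* E eps-avoids kAPs: for every kAP P = {x + i*lam : i < k} with gap lam > 0,
   sup_{p in P} inf_{y in E} |y - p| >= eps * lam.  Since P is finite the sup is
   attained, and inf_{y in E} |y - p| >= eps*lam means every y in E is at
   distance >= eps*lam from p (vacuous if E is empty, inf = +infinity). *)
Definition eps_avoids_kAP (k : nat) (eps : R) (E : R -> Prop) : Prop :=
  forall x lam : R, 0 < lam ->
    exists i : nat, (i < k)%nat /\
      forall y, E y -> eps * lam <= Rabs (y - (x + INR i * lam)).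

Definition is_glb (S : R -> Prop) (m : R) : Prop :=
  (forall s, S s -> m <= s) /\
  (forall m', (forall s, S s -> m' <= s) -> m' <= m).

(* s-dimensional Hausdorff measure of E is zero: H^s(E) = lim_{delta->0} H^s_delta(E) = 0,
   i.e. for all delta > 0, H^s_delta(E) = inf { sum diam(U_n)^s : E ⊆ ∪ U_n,
   diam U_n <= delta } = 0.  The numbers r n are upper bounds (> 0) for diam (U n);
   taking the infimum this does not change the value. *)
Definition hausdorff_null (s : R) (E : R -> Prop) : Prop :=
  forall delta eta : R, 0 < delta -> 0 < eta ->
    exists (U : nat -> R -> Prop) (r : nat -> R),
      (forall n, 0 < r n <= delta) /\
      (forall n y z, U n y -> U n z -> Rabs (y - z) <= r n) /\
      (forall y, E y -> exists n, U n y) /\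
      (forall N, sum_f_R0 (fun n => Rpower (r n) s) N <= eta).

Definition hausdorff_dim (E : R -> Prop) (d : R) : Prop :=
  is_glb (fun s => 0 <= s /\ hausdorff_null s E) d.

Definition d_ke (k : nat) (eps : R) (d : R) : Prop :=
  is_lub (fun t => exists E, bounded_set E /\ eps_avoids_kAP k eps E /\
                              hausdorff_dim E t) d.

Definition covered_by_balls (F : R -> Prop) (r : R) (n : nat) : Prop :=
  exists (c rad : nat -> R),
    (forall i, (i < n)%nat -> 0 < rad i <= r) /\
    (forall y, F y -> exists i, (i < n)%nat /\ Rabs (y - c i) < rad i).

(* sup_{x in E} N_r(B(x,R) ∩ E) <= C (R/r)^alpha, where N_r is the least number of
   balls, so N_r(F) <= bound iff some cover uses a number n <= bound of balls. *)
Definition assouad_ok (E : R -> Prop) (alpha : R) : Prop :=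
  exists C : R, 0 < C /\
    forall r Rr : R, 0 < r -> r < Rr ->
      forall x, E x ->
        exists n : nat,
          covered_by_balls (fun y => Rabs (y - x) < Rr /\ E y) r n /\
          INR n <= C * Rpower (Rr / r) alpha.

Definition assouad_dim (E : R -> Prop) (a : R) : Prop :=
  is_glb (fun alpha => 0 <= alpha /\ assouad_ok E alpha) a.

Definition ap_bound (k : nat) (eps : R) : R :=
  ln (Rceil (/ eps) + 1) / (ln (Rceil (/ eps) + 1) - ln (1 - / INR k)).

(* Main.v *)
Require Import Defs.
From Stdlib Require Import Reals Lra Lia List Arith ZArith.

Module NatPart.
Local Open Scope nat_scope.

Fixpoint cnt (f : nat -> bool) (T : nat) : nat :=
  match T with O => O | S T' => cnt f T' + (if f T' then 1 else 0) end.

Lemma cnt_le f T : cnt f T <= T.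
Proof. induction T; simpl; [lia|destruct (f T); lia]. Qed.

Lemma cnt_ext f g T : (forall c, c < T -> f c = g c) -> cnt f T = cnt g T.
Proof. induction T; simpl; intros H; [reflexivity|]. rewrite H by lia. rewrite IHT by (intros; apply H; lia). reflexivity. Qed.

Lemma cnt_add (f g h : nat -> bool) T :
  (forall c, c < T -> (if h c then 1 else 0) = (if f c then 1 else 0) + (if g c then 1 else 0))%nat ->
  cnt h T = cnt f T + cnt g T.
Proof. induction T; simpl; intros H; [reflexivity|]. rewrite H by lia. rewrite IHT by (intros; apply H; lia). lia. Qed.

Lemma cnt_true T : cnt (fun _ => true) T = T.
Proof. induction T; simpl; lia. Qed.

Section Bad.
Variable n k : nat.
Variable ii : nat -> nat.
Definition badc (c : nat) : bool := Nat.eqb (ii (c mod n)) (c / n).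

Lemma cnt_block q r : n <> 0 -> r <= n ->
  cnt badc (q * n + r) = cnt badc (q * n) + cnt (fun j => Nat.eqb (ii j) q) r.
Proof.
  intros Hn. induction r; intros Hr.
  - rewrite Nat.add_0_r. simpl. lia.
  - replace (q * n + S r) with (S (q * n + r)) by lia. simpl.
    rewrite IHr by lia.
    unfold badc.
    replace ((q * n + r) mod n) with r.
    2:{ rewrite Nat.add_comm, Nat.Div0.mod_add. rewrite Nat.mod_small by lia. reflexivity. }
    replace ((q * n + r) / n) with q.
    2:{ rewrite Nat.add_comm, Nat.div_add by lia. rewrite Nat.div_small by lia. reflexivity. }
    lia.
Qed.

Lemma cnt_blocks q : n <> 0 ->
  cnt badc (q * n) = cnt (fun j => Nat.ltb (ii j) q) n.
Proof.
  intros Hn. induction q.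
  - simpl. rewrite (cnt_ext _ (fun _ => false)). 2:{ intros; destruct (ii c); reflexivity. }
    clear. induction n; simpl; lia.
  - replace (S q * n) with (q * n + n) by lia. rewrite cnt_block by lia.
    rewrite IHq. symmetry. apply cnt_add. intros c _.
    destruct (Nat.ltb_spec (ii c) (S q)), (Nat.ltb_spec (ii c) q), (Nat.eqb_spec (ii c) q); lia.
Qed.

Lemma cnt_all : n <> 0 -> (forall j, j < n -> ii j < k) -> cnt badc (k * n) = n.
Proof.
  intros Hn H. rewrite cnt_blocks by lia. rewrite (cnt_ext _ (fun _ => true)).
  - apply cnt_true.
  - intros c Hc. apply Nat.ltb_lt. auto.
Qed.
End Bad.

Fixpoint sumLen (l : list (nat * nat)) : nat :=
  match l with nil => 0 | p :: t => (snd p - fst p) + sumLen t end.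

Lemma runs (bad : nat -> bool) T : exists l : list (nat * nat),
  length l <= 1 + cnt bad T /\
  (length l = 1 + cnt bad T -> exists u t, l = (u, T) :: t) /\
  sumLen l + cnt bad T <= T /\
  (forall p, In p l -> fst p <= snd p <= T) /\
  (forall c, c < T -> bad c = false -> exists p, In p l /\ fst p <= c < snd p).
Proof.
  induction T.
  - exists nil. simpl. repeat split; intros; try lia; try contradiction.
  - destruct IHT as (l & H1 & H2 & H3 & H4 & H5). simpl cnt.
    destruct (bad T) eqn:HB; rewrite ?HB.
    + exists l. repeat split.
      * lia.
      * intros; lia.
      * lia.
      * apply H4; auto.
      * pose proof (H4 p ltac:(auto)); lia.
      * intros c Hc Hbc. destruct (Nat.eq_dec c T). { subst; congruence. }
        apply H5; auto; lia.
    + destruct (Nat.eq_dec (length l) (1 + cnt bad T)) as [He|He].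
      * destruct (H2 He) as (u & t & ->).
        exists ((u, S T) :: t). assert (Hu := H4 (u, T) ltac:(simpl; auto)). simpl in Hu.
        repeat split.
        -- cbn [length] in *; lia.
        -- intros; exists u, t; reflexivity.
        -- cbn [sumLen fst snd] in *; lia.
        -- match goal with Hp : In p _ |- _ => destruct Hp as [<-|Hp]; simpl; [lia|]; pose proof (H4 p ltac:(simpl; auto)); lia end.
        -- match goal with Hp : In p _ |- _ => destruct Hp as [<-|Hp]; simpl; [lia|]; pose proof (H4 p ltac:(simpl; auto)); lia end.
        -- intros c Hc Hbc. destruct (Nat.eq_dec c T).
           ++ subst. exists (u, S T). simpl. split; [auto|lia].
           ++ destruct (H5 c ltac:(lia) Hbc) as (p & Hp & Hc').
              destruct Hp as [<-|Hp].
              ** exists (u, S T). simpl in *. split; [auto|lia].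
              ** exists p. simpl. auto.
      * exists ((T, S T) :: l). repeat split.
        -- simpl; lia.
        -- intros; eexists; eexists; reflexivity.
        -- cbn [sumLen fst snd]; lia.
        -- match goal with Hp : In p _ |- _ => destruct Hp as [<-|Hp]; simpl; [lia|]; pose proof (H4 p Hp); lia end.
        -- match goal with Hp : In p _ |- _ => destruct Hp as [<-|Hp]; simpl; [lia|]; pose proof (H4 p Hp); lia end.
        -- intros c Hc Hbc. destruct (Nat.eq_dec c T).
           ++ subst. exists (T, S T). simpl. split; [auto|lia].
           ++ destruct (H5 c ltac:(lia) Hbc) as (p & Hp & Hc'). exists p. simpl. auto.
Qed.

End NatPart.
Import NatPart.
Open Scope R_scope.

Definition pw (x a : R) : R := if Rlt_dec 0 x then Rpower x a else 0.

Lemma exp_tan (x c : R) : exp c * (1 + (x - c)) <= exp x.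
Proof.
  replace (exp x) with (exp c * exp (x - c)) by (rewrite <- exp_plus; f_equal; ring).
  apply Rmult_le_compat_l; [apply Rlt_le, exp_pos| apply exp_ineq1_le].
Qed.

Lemma tpow (t a : R) : 0 <= a <= 1 -> 0 < t -> Rpower t a <= a * t + (1 - a).
Proof.
  intros Ha Ht. unfold Rpower.
  set (c := a * ln t).
  pose proof (exp_tan (ln t) c) as H1. pose proof (exp_tan 0 c) as H2.
  rewrite exp_ln in H1 by lra. rewrite exp_0 in H2.
  assert (a * (exp c * (1 + (ln t - c))) + (1 - a) * (exp c * (1 + (0 - c))) = exp c)
    by (unfold c; ring).
  nra.
Qed.

Lemma Rpower_pos (x a : R) : 0 < Rpower x a.
Proof. unfold Rpower; apply exp_pos. Qed.

Lemma pw_nonneg x a : 0 <= pw x a.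
Proof. unfold pw; destruct Rlt_dec; [apply Rlt_le, Rpower_pos|lra]. Qed.

Lemma tangent (x y a : R) : 0 <= a <= 1 -> 0 < y -> 0 <= x ->
  pw x a <= Rpower y a + a * (Rpower y a / y) * (x - y).
Proof.
  intros Ha Hy Hx. unfold pw. destruct Rlt_dec as [Hx'|Hx'].
  - replace x with (y * (x / y)) at 1 by (field; lra).
    rewrite <- Rpower_mult_distr by (try apply Rdiv_lt_0_compat; lra).
    pose proof (tpow (x / y) a Ha ltac:(apply Rdiv_lt_0_compat; lra)).
    pose proof (Rpower_pos y a).
    apply Rle_trans with (Rpower y a * (a * (x / y) + (1 - a))).
    + apply Rmult_le_compat_l; lra.
    + right. field. lra.
  - assert (x = 0) by lra. subst x. pose proof (Rpower_pos y a).
    replace (Rpower y a + a * (Rpower y a / y) * (0 - y)) with ((1 - a) * Rpower y a)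
      by (field; lra). nra.
Qed.

Fixpoint sumL (l : list R) : R := match l with nil => 0 | x :: t => x + sumL t end.

Lemma jensen_gen (l : list R) (y a : R) : 0 <= a <= 1 -> 0 < y ->
  (forall x, In x l -> 0 <= x) ->
  sumL (map (fun x => pw x a) l) <=
  INR (length l) * Rpower y a + a * (Rpower y a / y) * (sumL l - INR (length l) * y).
Proof.
  intros Ha Hy. induction l as [|x t IH]; intros Hl.
  - simpl. lra.
  - pose proof (tangent x y a Ha Hy (Hl x (or_introl eq_refl))).
    pose proof (IH (fun z Hz => Hl z (or_intror Hz))).
    cbn [length map sumL]. rewrite S_INR. nra.
Qed.

Lemma sumL_nonneg l : (forall x, In x l -> 0 <= x) -> 0 <= sumL l.
Proof. induction l; simpl; intros H; [lra|]. pose proof (H a (or_introl eq_refl)).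
  pose proof (IHl (fun z Hz => H z (or_intror Hz))). lra. Qed.

Lemma jensen (l : list R) (a M S0 : R) : 0 <= a <= 1 -> 0 < S0 -> 0 < M ->
  (forall x, In x l -> 0 <= x) -> INR (length l) <= M -> sumL l <= S0 ->
  sumL (map (fun x => pw x a) l) <= M * Rpower (S0 / M) a.
Proof.
  intros Ha HS HM Hl Hm HS0. set (y := S0 / M).
  assert (Hy : 0 < y) by (unfold y; apply Rdiv_lt_0_compat; lra).
  pose proof (jensen_gen l y a Ha Hy Hl).
  pose proof (Rpower_pos y a) as Hp.
  assert (Hq : 0 <= Rpower y a / y) by (apply Rlt_le, Rdiv_lt_0_compat; lra).
  assert (E : a * (Rpower y a / y) * S0 = a * M * Rpower y a)
    by (unfold y; field; split; lra).
  pose proof (pos_INR (length l)).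
  assert (a * (Rpower y a / y) * sumL l <= a * (Rpower y a / y) * S0).
  { apply Rmult_le_compat_l; [|lra]. apply Rmult_le_pos; lra. }
  assert (INR (length l) * Rpower y a + a * (Rpower y a / y) * (sumL l - INR (length l) * y)
          = (1 - a) * INR (length l) * Rpower y a + a * (Rpower y a / y) * sumL l)
    by (field; lra).
  assert ((1 - a) * INR (length l) * Rpower y a <= (1 - a) * M * Rpower y a).
  { apply Rmult_le_compat_r; [lra|]. apply Rmult_le_compat_l; lra. }
  nra.
Qed.

Lemma fin_choice (P : nat -> nat -> Prop) n :
  (forall j, (j < n)%nat -> exists i, P j i) -> exists f, forall j, (j < n)%nat -> P j (f j).
Proof.
  induction n; intros H.
  - exists (fun _ => O). intros; lia.
  - destruct IHn as [f Hf]. { intros; apply H; lia. }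
    destruct (H n ltac:(lia)) as [i Hi].
    exists (fun j => if Nat.eq_dec j n then i else f j).
    intros j Hj. destruct (Nat.eq_dec j n); [subst; auto|apply Hf; lia].
Qed.

Lemma locate (a d y : R) (T : nat) : 0 < d -> (1 <= T)%nat -> a <= y <= a + INR T * d ->
  exists c, (c < T)%nat /\ a + INR c * d <= y <= a + INR (S c) * d.
Proof.
  intros Hd. induction T; intros HT Hy; [lia|].
  destruct (Rle_dec y (a + INR T * d)) as [H|H].
  - destruct (Nat.eq_dec T 0) as [->|HT0].
    + exists O. simpl in *. split; [lia|lra].
    + destruct IHT as (c & Hc & Hc'); [lia| lra |]. exists c; split; [lia|lra].
  - exists T. split; [lia|lra].
Qed.

Lemma pieces (k : nat) (eps : R) (n : nat) (E : R -> Prop) :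
  (1 <= k)%nat -> (1 <= n)%nat -> 0 < eps -> 1 <= INR n * eps -> eps_avoids_kAP k eps E ->
  forall a L, 0 < L ->
  exists l : list (nat * nat),
    (length l <= S n)%nat /\ (sumLen l <= (k - 1) * n)%nat /\
    (forall p, In p l -> (fst p <= snd p)%nat) /\
    forall y, E y -> a <= y <= a + L ->
      exists p, In p l /\ a + INR (fst p) * (L / INR (k * n)) <= y <= a + INR (snd p) * (L / INR (k * n)).
Proof.
  intros Hk Hn He Hne Hav a L HL.
  set (d := L / INR (k * n)).
  assert (Hkn : 0 < INR (k * n)) by (apply lt_0_INR; nia).
  assert (Hd : 0 < d) by (unfold d; apply Rdiv_lt_0_compat; lra).
  assert (HLd : L = INR (k * n) * d) by (unfold d; field; lra).
  assert (HnR : 0 < INR n) by (apply lt_0_INR; lia).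
  destruct (fin_choice (fun j i => (i < k)%nat /\ forall y, E y ->
      eps * (INR n * d) <= Rabs (y - ((a + (INR j + /2) * d) + INR i * (INR n * d)))) n)
    as [ii Hii].
  { intros j Hj. destruct (Hav (a + (INR j + /2) * d) (INR n * d)) as (i & Hi & Hi').
    - apply Rmult_lt_0_compat; lra.
    - exists i. auto. }
  assert (Hbad : forall c y, (c < k * n)%nat -> badc n ii c = true -> E y ->
            a + INR c * d <= y <= a + INR (S c) * d -> False).
  { intros c y Hc Hb Ey Hy. unfold badc in Hb. apply Nat.eqb_eq in Hb.
    assert (Hj : (c mod n < n)%nat) by (apply Nat.mod_upper_bound; lia).
    destruct (Hii (c mod n) Hj) as [_ H]. specialize (H y Ey).
    rewrite Hb in H.
    assert (Hc' : INR c = INR (c / n) * INR n + INR (c mod n)).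
    { rewrite <- mult_INR, <- plus_INR. f_equal. rewrite Nat.mul_comm. apply Nat.div_mod. lia. }
    rewrite S_INR in Hy.
    assert (Hp : a + (INR (c mod n) + / 2) * d + INR (c / n) * (INR n * d) = a + (INR c + /2) * d)
      by (rewrite Hc'; ring).
    rewrite Hp in H.
    assert (Rabs (y - (a + (INR c + / 2) * d)) <= d / 2) by (apply Rabs_le; lra).
    assert (d <= eps * (INR n * d)) by nra.
    lra. }
  destruct (runs (badc n ii) (k * n)) as (l & H1 & _ & H3 & H4 & H5).
  rewrite cnt_all with (k := k) in H1, H3 by (try lia; intros j Hj; apply (Hii j Hj)).
  exists l. split; [lia|]. split; [nia|]. split.
  { intros p Hp; apply H4; auto. }
  intros y Ey Hy.
  destruct (locate a d y (k * n) Hd ltac:(nia) ltac:(lra)) as (c & Hc & Hcy).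
  destruct (badc n ii c) eqn:Hb.
  - exfalso. eapply Hbad; eauto.
  - destruct (H5 c Hc Hb) as (p & Hp & Hcp). exists p. split; auto.
    fold d. rewrite S_INR in Hcy.
    assert (INR (fst p) <= INR c) by (apply le_INR; lia).
    assert (INR c + 1 <= INR (snd p)) by (rewrite <- S_INR; apply le_INR; lia).
    nra.
Qed.

Lemma cov_mono (F G : R -> Prop) r n : (forall y, F y -> G y) ->
  covered_by_balls G r n -> covered_by_balls F r n.
Proof. intros H (c & rad & H1 & H2). exists c, rad. split; auto. Qed.

Lemma cov_empty r : covered_by_balls (fun _ => False) r 0.
Proof. exists (fun _ => 0), (fun _ => 0). split; intros; [lia|contradiction]. Qed.

Lemma cov_union (F G : R -> Prop) r n1 n2 :
  covered_by_balls F r n1 -> covered_by_balls G r n2 ->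
  covered_by_balls (fun y => F y \/ G y) r (n1 + n2).
Proof.
  intros (c1 & r1 & A1 & B1) (c2 & r2 & A2 & B2).
  exists (fun i => if Nat.ltb i n1 then c1 i else c2 (i - n1)%nat),
         (fun i => if Nat.ltb i n1 then r1 i else r2 (i - n1)%nat).
  split.
  - intros i Hi. destruct (Nat.ltb_spec i n1); [apply A1; auto|apply A2; lia].
  - intros y [Hy|Hy].
    + destruct (B1 y Hy) as (i & Hi & Hi'). exists i. split; [lia|].
      destruct (Nat.ltb_spec i n1); [auto|lia].
    + destruct (B2 y Hy) as (i & Hi & Hi'). exists (n1 + i)%nat. split; [lia|].
      destruct (Nat.ltb_spec (n1 + i) n1); [lia|]. replace (n1 + i - n1)%nat with i by lia. auto.
Qed.

Lemma cov_single (u v r : R) : 0 < r -> v - u <= r ->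
  covered_by_balls (fun y => u <= y <= v) r 1.
Proof.
  intros Hr Huv. exists (fun _ => (u + v) / 2), (fun _ => r). split.
  - intros; lra.
  - intros y Hy. exists O. split; [lia|]. apply Rabs_def1; lra.
Qed.

Lemma combine (F : (nat * nat) -> R -> Prop) (w : nat * nat -> R) (l : list (nat * nat)) r :
  (forall p, In p l -> exists m, covered_by_balls (F p) r m /\ INR m <= w p) ->
  exists m, covered_by_balls (fun y => exists p, In p l /\ F p y) r m /\ INR m <= sumL (map w l).
Proof.
  induction l as [|p t IH]; intros H.
  - exists O. split; [|simpl; lra]. eapply cov_mono; [|apply cov_empty]. intros y (p & [] & _).
  - destruct (H p (or_introl eq_refl)) as (m1 & C1 & W1).
    destruct IH as (m2 & C2 & W2). { intros; apply H; right; auto. }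
    exists (m1 + m2)%nat. split.
    + eapply cov_mono; [|apply (cov_union _ _ _ _ _ C1 C2)].
      intros y (p' & [<-|Hp'] & Hy); [left; auto|right; eauto].
    + rewrite plus_INR. simpl. lra.
Qed.

Lemma sumL_lens (l : list (nat * nat)) (c : R) :
  sumL (map (fun p => INR (snd p - fst p) * c) l) = INR (sumLen l) * c.
Proof. induction l; simpl; [lra|]. rewrite plus_INR, IHl. ring. Qed.

Lemma sumL_le (l : list (nat*nat)) (f g : nat*nat -> R) :
  (forall p, In p l -> f p <= g p) -> sumL (map f l) <= sumL (map g l).
Proof. induction l; simpl; intros H; [lra|]. pose proof (H a (or_introl eq_refl)).
  pose proof (IHl (fun p Hp => H p (or_intror Hp))). lra. Qed.

Lemma sumL_split (l : list (nat*nat)) (f : nat*nat -> R) (A : R) :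
  sumL (map (fun p => 1 + A * f p) l) = INR (length l) + A * sumL (map f l).
Proof. induction l; simpl; [lra|]. rewrite IHl. destruct (length l); simpl; ring. Qed.

Lemma sumL_map_comp (l : list (nat*nat)) (f : nat*nat -> R) (g : R -> R) :
  sumL (map (fun p => g (f p)) l) = sumL (map g (map f l)).
Proof. induction l; simpl; [lra|]. rewrite IHl; auto. Qed.

Section Main.
Variables (k : nat) (eps : R) (n : nat) (E : R -> Prop) (a : R).
Hypotheses (Hk : (2 <= k)%nat) (Hn : (1 <= n)%nat) (He : 0 < eps) (Hne : 1 <= INR n * eps)
  (Hav : eps_avoids_kAP k eps E) (Ha : 0 <= a <= 1).
Let M := INR (S n).
Let q := 1 - / INR k.
Let th := M * Rpower (q / M) a.
Hypothesis Hth : th < 1.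
Let A := M / (1 - th).
Variable r : R.
Hypothesis Hr : 0 < r.
Let B (L : R) := if Rle_dec L r then 1 else A * Rpower (L / r) a.

Lemma q_pos : 0 < q.
Proof. unfold q. assert (2 <= INR k) by (replace 2 with (INR 2) by (simpl; lra); apply le_INR; auto).
  assert (/ INR k <= / 2) by (apply Rinv_le_contravar; lra). lra. Qed.

Lemma M_pos : 1 <= M.
Proof. unfold M. rewrite S_INR. pose proof (pos_INR n). lra. Qed.

Lemma A_pos : 0 <= A.
Proof. unfold A. pose proof M_pos. apply Rlt_le, Rdiv_lt_0_compat; lra. Qed.

Lemma main_count (T : nat) : forall u L, 0 <= L -> L * q ^ T <= r ->
  exists m, covered_by_balls (fun y => E y /\ u <= y <= u + L) r m /\ INR m <= B L.
Proof.
  pose proof q_pos as Hq. pose proof M_pos as HM. pose proof A_pos as HA.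
  induction T as [|T IH]; intros u L HL HLT.
  - simpl in HLT. exists 1%nat. split.
    + eapply cov_mono; [|apply (cov_single u (u + L) r Hr); lra]. intros y [_ Hy]; auto.
    + unfold B. destruct Rle_dec; simpl; lra.
  - destruct (Rle_dec L r) as [HLr|HLr].
    { exists 1%nat. split.
      + eapply cov_mono; [|apply (cov_single u (u + L) r Hr); lra]. intros y [_ Hy]; auto.
      + unfold B. destruct Rle_dec; simpl; lra. }
    assert (HL0 : 0 < L) by lra.
    destruct (pieces k eps n E ltac:(lia) Hn He Hne Hav u L HL0) as (l & P1 & P2 & P3 & P4).
    set (d := L / INR (k * n)) in *.
    assert (Hkn : 0 < INR (k * n)) by (apply lt_0_INR; nia).
    assert (Hd : 0 < d) by (unfold d; apply Rdiv_lt_0_compat; lra).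
    assert (Hqd : INR ((k - 1) * n) * d = q * L).
    { unfold d, q. rewrite !mult_INR, minus_INR by lia. simpl INR.
      assert (0 < INR k) by (apply lt_0_INR; lia). assert (0 < INR n) by (apply lt_0_INR; lia).
      field. lra. }
    set (len := fun p : nat * nat => INR (snd p - fst p) * d).
    assert (Hsum : sumL (map len l) <= q * L).
    { unfold len. rewrite sumL_lens. rewrite <- Hqd. apply Rmult_le_compat_r; [lra|]. apply le_INR; auto. }
    assert (Hlen0 : forall p, In p l -> 0 <= len p).
    { intros p _. unfold len. pose proof (pos_INR (snd p - fst p)). nra. }
    assert (Hlen1 : forall p, In p l -> len p <= q * L).
    { intros p Hp. eapply Rle_trans; [|apply Hsum].
      clear -Hp Hlen0. induction l as [|x t IH']; [destruct Hp|].
      simpl. destruct Hp as [<-|Hp].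
      - assert (0 <= sumL (map len t)); [|lra]. apply sumL_nonneg. intros z Hz.
        apply in_map_iff in Hz. destruct Hz as (w & <- & Hw). apply Hlen0; right; auto.
      - pose proof (Hlen0 x (or_introl eq_refl)). pose proof (IH' (fun p H => Hlen0 p (or_intror H)) Hp). lra. }
    destruct (combine (fun p y => E y /\ (u + INR (fst p) * d) <= y <= (u + INR (fst p) * d) + len p)
               (fun p => B (len p)) l r) as (m & Cm & Wm).
    { intros p Hp. apply IH.
      - apply Hlen0; auto.
      - pose proof (Hlen1 p Hp). simpl in HLT.
        pose proof (pow_le q T ltac:(lra)). nra. }
    exists m. split.
    + eapply cov_mono; [|apply Cm]. intros y [Ey Hy].
      destruct (P4 y Ey Hy) as (p & Hp & Hpy). exists p. split; auto. split; auto.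
      unfold len. fold d in Hpy. rewrite minus_INR by (apply P3; auto). lra.
    + unfold B. destruct (Rle_dec L r) as [|_]; [lra|].
      eapply Rle_trans; [apply Wm|].
      eapply Rle_trans.
      { apply (sumL_le l _ (fun p => 1 + A * pw (len p / r) a)).
        intros p Hp. unfold B. destruct Rle_dec as [H|H].
        - pose proof (pw_nonneg (len p / r) a). nra.
        - unfold pw. destruct Rlt_dec as [_|H']; [lra|].
          exfalso. apply H'. apply Rdiv_lt_0_compat; lra. }
      rewrite sumL_split.
      rewrite (sumL_map_comp l (fun p => len p / r) (fun x => pw x a)).
      assert (HJ : sumL (map (fun x => pw x a) (map (fun p => len p / r) l)) <= M * Rpower ((q * (L / r)) / M) a).
      { apply jensen.
        - auto.
        - apply Rmult_lt_0_compat; [lra|]. apply Rdiv_lt_0_compat; lra.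
        - lra.
        - intros x Hx. apply in_map_iff in Hx. destruct Hx as (p & <- & Hp).
          unfold Rdiv; apply Rmult_le_pos; [apply Hlen0; auto|apply Rlt_le, Rinv_0_lt_compat; lra].
        - rewrite length_map. unfold M. apply le_INR; auto.
        - replace (sumL (map (fun p => len p / r) l)) with (sumL (map len l) / r).
          + unfold Rdiv. rewrite <- Rmult_assoc. apply Rmult_le_compat_r; [apply Rlt_le, Rinv_0_lt_compat; lra|]. lra.
          + clear -Hr. induction l as [|x t IH2]; simpl; [field; lra|]. rewrite <- IH2. field; lra. }
      replace ((q * (L / r)) / M) with ((q / M) * (L / r)) in HJ by (field; lra).
      rewrite <- Rpower_mult_distr in HJ by (try apply Rdiv_lt_0_compat; lra).
      fold th in HJ. 
      set (X := Rpower (L / r) a) in *.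
      assert (HX : 1 <= X).
      { unfold X. rewrite <- (Rpower_O (L / r)) by (apply Rdiv_lt_0_compat; lra).
        apply Rle_Rpower; [|lra]. apply (Rmult_le_reg_r r); [lra|]. field_simplify; lra. }
      assert (HAth : A * (1 - th) = M) by (unfold A; field; lra).
      assert (INR (length l) <= M) by (unfold M; apply le_INR; auto).
      assert (A * sumL (map (fun x => pw x a) (map (fun p => len p / r) l)) <= A * (th * X)).
      { apply Rmult_le_compat_l; auto. unfold th. rewrite Rmult_assoc. exact HJ. }
      nra.
Qed.
End Main.

Section Cnt.
Variables (k : nat) (eps : R) (n : nat) (E : R -> Prop) (a : R).
Hypotheses (Hk : (2 <= k)%nat) (Hn : (1 <= n)%nat) (He : 0 < eps) (Hne : 1 <= INR n * eps)
  (Hav : eps_avoids_kAP k eps E) (Ha : 0 <= a <= 1).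
Let M := INR (S n).
Let q := 1 - / INR k.
Let th := M * Rpower (q / M) a.
Hypothesis Hth : th < 1.
Let A := M / (1 - th).

Lemma A_ge1 : 1 <= A.
Proof. unfold A. assert (1 <= M) by (unfold M; rewrite S_INR; pose proof (pos_INR n); lra).
  pose proof (Rpower_pos (q / M) a). assert (0 < th) by (unfold th; apply Rmult_lt_0_compat; lra).
  apply Rle_trans with M; [lra|]. unfold Rdiv. rewrite <- (Rmult_1_r M) at 1.
  apply Rmult_le_compat_l; [lra|].
  assert (Hq1: /(1-th) * (1-th) = 1) by (field; lra). assert (0 < /(1-th)) by (apply Rinv_0_lt_compat; lra). nra. Qed.

Lemma count_bound r u L : 0 < r <= L ->
  exists m, covered_by_balls (fun y => E y /\ u <= y <= u + L) r m /\ INR m <= A * Rpower (L / r) a.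
Proof.
  intros [Hr HL].
  assert (Hq : 0 < q) by (unfold q; apply (q_pos k Hk)).
  assert (Hq1 : q < 1) by (unfold q; assert (0 < / INR k) by (apply Rinv_0_lt_compat, lt_0_INR; lia); lra).
  destruct (pow_lt_1_zero q ltac:(rewrite Rabs_pos_eq; lra) (r / L) ltac:(apply Rdiv_lt_0_compat; lra))
    as [T HT].
  specialize (HT T (le_n T)). rewrite Rabs_pos_eq in HT by (apply pow_le; lra).
  destruct (main_count k eps n E a Hk Hn He Hne Hav Ha Hth r Hr T u L ltac:(lra)) as (m & Hc & Hm).
  { fold q. apply (Rmult_le_reg_r (/ L)); [apply Rinv_0_lt_compat; lra|].
    replace (L * q ^ T * / L) with (q ^ T) by (field; lra). fold (r / L). lra. }
  exists m. split; auto. fold q M th A in Hm.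
  destruct Rle_dec as [H|H].
  - assert (L = r) by lra. subst L. replace (r / r) with 1 by (field; lra).
    unfold Rpower. rewrite ln_1, Rmult_0_r, exp_0. pose proof A_ge1. lra.
  - exact Hm.
Qed.

Lemma assouad_from : assouad_ok E a.
Proof.
  exists (A * Rpower 2 a). split.
  { pose proof A_ge1. pose proof (Rpower_pos 2 a). nra. }
  intros r Rr Hr HrR x Ex.
  destruct (count_bound r (x - Rr) (2 * Rr) ltac:(lra)) as (m & Hc & Hm).
  exists m. split.
  - eapply cov_mono; [|apply Hc]. intros y [Hy Ey]. apply Rabs_def2 in Hy. split; auto; lra.
  - replace (2 * Rr / r) with (2 * (Rr / r)) in Hm by (field; lra).
    rewrite <- Rpower_mult_distr in Hm by (try apply Rdiv_lt_0_compat; lra).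
    rewrite <- Rmult_assoc in Hm. exact Hm.
Qed.

Lemma sum_ind_le (m : nat) (c : R) N : 0 <= c ->
  sum_f_R0 (fun i => if Nat.ltb i m then c else 0) N <= INR m * c.
Proof.
  intros Hc. assert (forall N, sum_f_R0 (fun i => if Nat.ltb i m then c else 0) N = INR (Nat.min (S N) m) * c).
  { clear N. intros N. induction N as [|N0 IHN0].
    - cbn [sum_f_R0]. destruct m as [|m]; [simpl; lra|]. replace (Nat.min 1 (S m)) with 1%nat by lia. simpl. lra.
    - rewrite tech5, IHN0. destruct (Nat.ltb_spec (S N0) m).
      + rewrite !Nat.min_l by lia. rewrite (S_INR (S N0)). ring.
      + rewrite !Nat.min_r by lia. ring. }
  rewrite H. apply Rmult_le_compat_r; auto. apply le_INR; lia.
Qed.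

Lemma sum_geo (e : R) N : sum_f_R0 (fun i => e * (/2) ^ (S i)) N = e - e * (/2) ^ (S N).
Proof. induction N; [simpl; field|]. rewrite tech5, IHN. simpl. field. Qed.

Lemma hausdorff_from (s' : R) : a < s' -> bounded_set E -> hausdorff_null s' E.
Proof.
  intros Has [Mb HMb] delta eta Hd Heta.
  set (L := 2 * (Rabs Mb + 1)). set (u := - (Rabs Mb + 1)).
  assert (HL : 0 < L) by (unfold L; pose proof (Rabs_pos Mb); lra).
  pose proof A_ge1 as HA.
  set (K := A * Rpower L a * Rpower 2 s').
  assert (HK : 0 < K) by (unfold K; pose proof (Rpower_pos L a); pose proof (Rpower_pos 2 s'); 
    apply Rmult_lt_0_compat; [apply Rmult_lt_0_compat|]; lra).
  set (z := eta / 2 / K).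
  assert (Hz : 0 < z) by (unfold z; apply Rdiv_lt_0_compat; lra).
  set (rho := Rpower z (/ (s' - a))).
  set (r := Rmin rho (Rmin L (delta / 2))).
  assert (Hrho : 0 < rho) by apply Rpower_pos.
  assert (Hr : 0 < r) by (unfold r; repeat apply Rmin_glb_lt; lra).
  assert (HrL : r <= L) by (unfold r; pose proof (Rmin_r rho (Rmin L (delta/2))); pose proof (Rmin_l L (delta/2)); lra).
  assert (Hrd : 2 * r <= delta) by (unfold r; pose proof (Rmin_r rho (Rmin L (delta/2))); pose proof (Rmin_r L (delta/2)); lra).
  assert (Hrr : r <= rho) by (unfold r; apply Rmin_l).
  destruct (count_bound r u L ltac:(lra)) as (m & (c & rad & Hrad & Hcov) & Hm).
  assert (Hfirst : INR m * Rpower (2 * r) s' <= eta / 2).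
  { assert (E1 : A * Rpower (L / r) a * Rpower (2 * r) s' = K * Rpower r (s' - a)).
    { unfold K. unfold Rdiv. rewrite <- Rpower_mult_distr by (try apply Rinv_0_lt_compat; lra).
      rewrite <- Rpower_mult_distr by lra.
      replace (Rpower (/ r) a) with (Rpower r (- a)).
      2:{ rewrite Rpower_Ropp. unfold Rpower. rewrite ln_Rinv by lra. rewrite <- exp_Ropp. f_equal. ring. }
      replace (s' - a) with (s' + - a) by ring. rewrite Rpower_plus. ring. }
    assert (E2 : Rpower r (s' - a) <= z).
    { apply Rle_trans with (Rpower rho (s' - a)).
      - apply Rle_Rpower_l; lra.
      - unfold rho. rewrite Rpower_mult. replace (/ (s' - a) * (s' - a)) with 1 by (field; lra).
        rewrite Rpower_1 by lra. lra. }
    assert (INR m * Rpower (2 * r) s' <= A * Rpower (L / r) a * Rpower (2 * r) s').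
    { apply Rmult_le_compat_r; [apply Rlt_le, Rpower_pos|auto]. }
    assert (K * Rpower r (s' - a) <= K * z) by (apply Rmult_le_compat_l; lra).
    assert (K * z = eta / 2) by (unfold z; field; lra).
    lra. }
  set (e' := Rmin (eta / 2) (Rpower delta s')).
  assert (He' : 0 < e') by (unfold e'; apply Rmin_glb_lt; [lra|apply Rpower_pos]).
  assert (Hs' : 0 < s') by lra.
  set (tl := fun i : nat => Rpower (e' * (/2) ^ (S i)) (/ s')).
  assert (Htl : forall i, Rpower (tl i) s' = e' * (/2) ^ (S i)).
  { intros i. unfold tl. rewrite Rpower_mult. replace (/ s' * s') with 1 by (field; lra).
    apply Rpower_1. apply Rmult_lt_0_compat; [lra|apply pow_lt; lra]. }
  exists (fun i y => (i < m)%nat /\ Rabs (y - c i) < rad i).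
  exists (fun i => if Nat.ltb i m then 2 * r else tl i).
  split; [|split; [|split]].
  - intros i. destruct (Nat.ltb_spec i m); [lra|]. split; [apply Rpower_pos|].
    unfold tl. apply Rle_trans with (Rpower (Rpower delta s') (/ s')).
    + apply Rle_Rpower_l; [apply Rlt_le, Rinv_0_lt_compat; lra|]. split.
      * apply Rmult_lt_0_compat; [lra|apply pow_lt; lra].
      * assert (0 < (/2) ^ (S i) <= 1).
        { split; [apply pow_lt; lra|]. apply Rlt_le; apply (pow_lt_1_compat (/2) (S i)); [lra|lia]. }
        assert (e' <= Rpower delta s') by (unfold e'; apply Rmin_r). nra.
    + rewrite Rpower_mult. replace (s' * / s') with 1 by (field; lra). rewrite Rpower_1 by lra. lra.
  - intros i y w [Hi Hy] [_ Hw]. destruct (Nat.ltb_spec i m); [|lia].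
    pose proof (Hrad i Hi). 
    assert (Rabs (y - w) <= Rabs (y - c i) + Rabs (c i - w)).
    { replace (y - w) with ((y - c i) + (c i - w)) by ring. apply Rabs_triang. }
    rewrite Rabs_minus_sym in Hw. lra.
  - intros y Ey. destruct (Hcov y) as (i & Hi & Hy).
    { split; auto. pose proof (HMb y Ey) as H. pose proof (Rle_abs y); pose proof (Rle_abs (- y)); rewrite Rabs_Ropp in *. unfold u, L.
      pose proof (Rle_abs Mb). split; lra. }
    exists i. auto.
  - intros N. 
    apply Rle_trans with (sum_f_R0 (fun i => (if Nat.ltb i m then Rpower (2 * r) s' else 0) + e' * (/2) ^ (S i)) N).
    + apply sum_Rle. intros i _. cbv beta. destruct (Nat.ltb_spec i m).
      * pose proof (pow_lt (/2) (S i) ltac:(lra)). assert (0 < e' * (/2)^(S i)) by (apply Rmult_lt_0_compat; lra). lra.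
      * rewrite Htl. lra.
    + rewrite plus_sum, sum_geo.
      pose proof (sum_ind_le m (Rpower (2 * r) s') N ltac:(apply Rlt_le, Rpower_pos)).
      pose proof (pow_lt (/2) (S N) ltac:(lra)).
      assert (e' <= eta / 2) by (unfold e'; apply Rmin_l).
      nra.
Qed.
End Cnt.

Lemma ln_le' x y : 0 < x -> x <= y -> ln x <= ln y.
Proof. intros Hx [H|H]; [left; apply ln_increasing; auto|right; subst; auto]. Qed.

Lemma lim_le (t s : R) : s < 1 -> (forall s', s < s' < 1 -> t <= s') -> t <= s.
Proof.
  intros Hs H. destruct (Rle_dec t s) as [|Hts]; auto. exfalso.
  set (s' := (s + Rmin t 1) / 2).
  assert (Rmin t 1 <= t) by apply Rmin_l. assert (Rmin t 1 <= 1) by apply Rmin_r.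
  assert (s < Rmin t 1) by (apply Rmin_glb_lt; lra).
  specialize (H s' ltac:(unfold s'; lra)). unfold s' in H. lra.
Qed.

Lemma ceil_nat (x : R) : 10 < x -> exists n : nat, INR n = Rceil x /\ x <= INR n < x + 1 /\ (1 <= n)%nat.
Proof.
  intros Hx. destruct (archimed (- x)) as [H1 H2].
  set (z := (1 - up (- x))%Z).
  assert (Hz : IZR z = Rceil x) by reflexivity.
  assert (Hz' : IZR z = 1 - IZR (up (- x))) by (unfold z; rewrite minus_IZR; reflexivity).
  assert (Hz0 : (0 <= z)%Z). { apply le_IZR. lra. }
  exists (Z.to_nat z). rewrite INR_IZR_INZ, Z2Nat.id by auto.
  split; [auto|]. split; [lra|].
  destruct (Z.to_nat z) eqn:Hn; [|lia]. exfalso.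
  assert (z = 0%Z) by lia. subst. rewrite H in Hz'. simpl in Hz'. lra.
Qed.

Theorem theorem1p1 :
  exists c : R, 0 < c /\
    forall (k : nat) (eps : R), (3 <= k)%nat -> 0 < eps -> eps < / 10 ->
      (forall d, d_ke k eps d -> d <= ap_bound k eps) /\
      ap_bound k eps <= 1 - c / (INR k * Rabs (ln eps)) /\
      (forall E : R -> Prop, bounded_set E -> eps_avoids_kAP k eps E ->
         forall a, assouad_dim E a -> a <= ap_bound k eps).
Proof.
  exists (/3). split; [lra|].
  intros k eps Hk He He10.
  set (x := / eps).
  assert (Hx : 10 < x).
  { unfold x. replace 10 with (/ / 10) by (field). apply Rinv_lt_contravar; [|lra].
    apply Rmult_lt_0_compat; lra. }
  destruct (ceil_nat x Hx) as (n & Hn1 & Hn2 & Hn3).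
  assert (Hne : 1 <= INR n * eps).
  { assert (x * eps = 1) by (unfold x; field; lra). nra. }
  set (M := INR (S n)).
  assert (HM : M = Rceil (/ eps) + 1) by (unfold M; rewrite S_INR; fold x; lra).
  set (q := 1 - / INR k).
  assert (HkR : 3 <= INR k) by (replace 3 with (INR 3) by (simpl; lra); apply le_INR; auto).
  assert (Hq : 0 < q < 1).
  { unfold q. assert (0 < / INR k) by (apply Rinv_0_lt_compat; lra).
    assert (/ INR k <= / 3) by (apply Rinv_le_contravar; lra). lra. }
  assert (HM1 : 10 < M) by (unfold M; rewrite S_INR; lra).
  assert (HlnM : 0 < ln M) by (rewrite <- ln_1; apply ln_increasing; lra).
  assert (Hlnq : ln q < 0) by (rewrite <- ln_1; apply ln_increasing; lra).
  set (D := ln M - ln q).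
  assert (HD : 0 < D) by (unfold D; lra).
  assert (Hs : ap_bound k eps = ln M / D) by (unfold ap_bound, D, q; rewrite HM; reflexivity).
  set (s := ln M / D) in *.
  assert (Hs0 : 0 < s < 1).
  { unfold s. split; [apply Rdiv_lt_0_compat; lra|].
    apply (Rmult_lt_reg_r D); [lra|]. unfold Rdiv. rewrite Rmult_assoc, Rinv_l by lra. unfold D. lra. }
  assert (Hth : forall a, s < a -> M * Rpower (q / M) a < 1).
  { intros a Ha. unfold Rpower. rewrite <- (exp_ln M) at 1 by lra. rewrite <- exp_plus.
    rewrite <- exp_0. apply exp_increasing.
    unfold Rdiv. rewrite ln_mult by (try apply Rinv_0_lt_compat; lra). rewrite ln_Rinv by lra.
    assert (ln M < a * D).
    { unfold s in Ha. apply (Rmult_lt_compat_r D) in Ha; [|lra].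
      unfold Rdiv in Ha. rewrite Rmult_assoc, Rinv_l, Rmult_1_r in Ha by lra. lra. }
    unfold D in *. lra. }
  assert (Hk2 : (2 <= k)%nat) by lia.
  rewrite Hs. split; [|split].
  - intros d [Hub Hlub]. apply Hlub. intros t (E & Hb & Hav & [Hglb _]).
    apply lim_le; [lra|]. intros s' Hs'.
    set (a := (s + s') / 2).
    apply Hglb. split; [lra|].
    apply (hausdorff_from k eps n E a Hk2 Hn3 He Hne Hav ltac:(unfold a; lra)
             (Hth a ltac:(unfold a; lra)) s' ltac:(unfold a; lra) Hb).
  -
    assert (Hlnx : Rabs (ln eps) = ln x).
    { unfold x. rewrite ln_Rinv by lra. rewrite Rabs_left; [lra|].
      rewrite <- ln_1. apply ln_increasing; lra. }
    rewrite Hlnx.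
    assert (Hlx : 0 < ln x) by (rewrite <- ln_1; apply ln_increasing; lra).
    assert (Hq1 : ln q <= - / INR k).
    { pose proof (exp_ineq1_le (ln q)). rewrite exp_ln in H by lra. assert (q = 1 - / INR k) by reflexivity. lra. }
    assert (HMx : ln M <= 2 * ln x).
    { replace (2 * ln x) with (ln (x * x)) by (rewrite ln_mult by lra; ring).
      apply ln_le'; [lra|]. unfold M. rewrite S_INR. nra. }
    assert (Hqx : - ln q <= ln x).
    { rewrite <- ln_Rinv by lra. apply ln_le'; [apply Rinv_0_lt_compat; lra|].
      assert (/ q <= 3 / 2); [|lra].
      unfold q. replace (1 - / INR k) with ((INR k - 1) / INR k) by (field; lra).
      rewrite Rinv_div. apply (Rmult_le_reg_r (INR k - 1)); [lra|].
      unfold Rdiv. rewrite Rmult_assoc, Rinv_l by lra. lra. }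
    assert (HD3 : D <= 3 * ln x) by (unfold D; lra).
    assert (Hks : 0 < INR k * ln x) by nra.
    assert (E1 : 1 - s = - ln q / D) by (unfold s, D; field; lra).
    assert (/ 3 / (INR k * ln x) <= - ln q / D); [|lra].
    apply (Rmult_le_reg_r (INR k * ln x * D)); [nra|].
    replace (/ 3 / (INR k * ln x) * (INR k * ln x * D)) with (D / 3) by (field; lra).
    replace (- ln q / D * (INR k * ln x * D)) with (- ln q * INR k * ln x) by (field; lra).
    assert (1 <= - ln q * INR k).
    { assert (/ INR k * INR k = 1) by (field; lra). nra. }
    nra.
  - intros E Hb Hav a [Hglb _]. apply lim_le; [lra|]. intros s' Hs'.
    apply Hglb. split; [lra|].
    apply (assouad_from k eps n E s' Hk2 Hn3 He Hne Hav ltac:(lra) (Hth s' ltac:(lra))).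
Qed.
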